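(* Let $\ell,m,n$ be positive integers with $\ell<n$, $m<n$, $\gcd(m,n)=1$, let $\mathcal{S}=\mathcal{F}[\ell,m,n]$, and let $k\in\mathbb{Z}^+$ and $\chi\in\mathbb{Z}$ with $|\chi|<k$. Then, as words, $$\mathcal{G}^+[k,\chi]=\begin{cases}\mathcal{S}^{k+\chi}\,\hat{\mathcal{X}}\,\big(\mathcal{S}^{\overline0}\big)^{-\chi}, & \chi=-k+1,\dots,-1,\\ \big(\mathcal{S}^{\overline{\ell d}}\big)^{\chi}\,\mathcal{S}^{k-\chi}\,\hat{\mathcal{X}}, & \chi=0,\dots,k-1,\end{cases}$$ $$\mathcal{G}^-[k,\chi]=\begin{cases}\mathcal{S}\,\big(\mathcal{S}^{\overline0}\big)^{-\chi}\,\hat{\mathcal{Y}}\,\mathcal{S}^{k+\chi-1}, & \chi=-k+1,\dots,0,\\ \mathcal{S}^{\overline{\ell d}}\,\hat{\mathcal{Y}}\,\mathcal{S}^{k-\chi}\,\big(\mathcal{S}^{\overline{\ell d}}\big)^{\chi-1}, & \chi=1,\dots,k-1.\end{cases}$$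
   Context: For positive integers $\ell<n$, $m<n$, $\gcd(m,n)=1$, $\mathcal{F}[\ell,m,n]$ is the $n$-periodic sequence with $\mathcal{F}[\ell,m,n]_i=L$ if $im\bmod n<\ell$ and $R$ otherwise, identified with the word $\mathcal{F}_0\cdots\mathcal{F}_{n-1}$. $d\in\{1,\dots,n-1\}$ is the inverse of $m$ mod $n$. Words over $\{L,R\}$: juxtaposition is concatenation, $\mathcal{W}^p$ is the concatenation of $p$ copies ($\mathcal{W}^0$ empty). $\mathcal{S}^{\overline j}$ is the word (length $n$) differing from $\mathcal{S}$ exactly at index $j\bmod n$. $\hat{\mathcal{X}}=\mathcal{S}_0\cdots\mathcal{S}_{n-d-1}$ and $\hat{\mathcal{Y}}=\mathcal{S}_{n-d}\cdots\mathcal{S}_{n-1}$. The left and right Farey roots of $\frac mn$ are the fractions $\frac{m^-}{n^-}<\frac{m^+}{n^+}$ with $m^\pm\ge0$, $n^\pm\ge1$, $m^-+m^+=m$, $n^-+n^+=n$, $m^+n^--m^-n^+=1$. Put $\ell^+=\lceil\ell n^+/n\rceil$, $\ell^-=\lfloor\ell n^-/n\rfloor$, $\ell_k^\pm=k\ell+\ell^\pm$, $m_k^\pm=km+m^\pm$, $n_k^\pm=kn+n^\pm$, and $\mathcal{G}^\pm[k,\chi]=\mathcal{F}[\ell_k^\pm+\chi,m_k^\pm,n_k^\pm]$, identified with its word of length $n_k^\pm$. *)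

(* Defs.v *)
From mathcomp Require Import all_boot all_order all_algebra.
Set Implicit Arguments. Unset Strict Implicit. Unset Printing Implicit Defensive.
Import Order.TTheory GRing.Theory Num.Theory.

Inductive LR := L | R.

Definition flipLR (x : LR) : LR := if x is L then R else L.

Definition word := seq LR.

(* The threshold l is taken in int so that G^± (whose threshold involves
   the integer chi) can be written directly; for the statement it is always
   positive. *)
Definition Fw (l : int) (m n : nat) : word :=
  mkseq (fun i => if (((i * m) %% n)%N%:Z < l)%R then L else R) n.

Definition wpow (W : word) (p : nat) : word := flatten (nseq p W).

Definition wflip (S : word) (j : nat) : word :=
  mkseq (fun i => if i == j %% size S then flipLR (nth L S i) else nth L S i)
        (size S).

Definition lplus (l n np : nat) : nat := (l * np + n.-1) %/ n.
Definition lminus (l n nm : nat) : nat := (l * nm) %/ n.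

Definition Gplus (l m n mp np k : nat) (chi : int) : word :=
  Fw ((k * l + lplus l n np)%N%:Z + chi)%R (k * m + mp) (k * n + np).
Definition Gminus (l m n mm nm k : nat) (chi : int) : word :=
  Fw ((k * l + lminus l n nm)%N%:Z + chi)%R (k * m + mm) (k * n + nm).

(* Main.v *)
Require Import Defs.
From mathcomp Require Import all_boot all_order all_algebra.
From mathcomp Require Import zify.
Import Order.TTheory GRing.Theory Num.Theory.


Definition letter (b : bool) : LR := if b then L else R.

Lemma size_wpow W p : size (wpow W p) = p * size W.
Proof. elim: p => [|p IH] //=; by rewrite /wpow /= size_cat -/(wpow W p) IH mulSn. Qed.

Lemma nth_wpow W p j : j < p * size W -> nth L (wpow W p) j = nth L W (j %% size W).
Proof.
elim: p j => [|p IH] j /=; first by rewrite mul0n.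
move=> Hj; rewrite /wpow /= -/(wpow W p) nth_cat.
case: ifP => Hs; first by rewrite modn_small.
rewrite IH; last by rewrite mulSn in Hj; lia.
have H : size W <= j by rewrite leqNgt Hs.
by rewrite -{2}(subnK H) modnDr.
Qed.

Lemma size_Fw T m n : size (Fw T m n) = n.
Proof. by rewrite size_mkseq. Qed.

Lemma nth_Fw T m n i : i < n -> nth L (Fw T m n) i = letter ((((i * m) %% n)%:Z < T)%R).
Proof. by move=> Hi; rewrite nth_mkseq. Qed.

Lemma size_wflip S j : size (wflip S j) = size S.
Proof. by rewrite size_mkseq. Qed.

Lemma nth_wflip S j r : r < size S ->
  nth L (wflip S j) r = if r == j %% size S then flipLR (nth L S r) else nth L S r.
Proof. by move=> Hr; rewrite nth_mkseq. Qed.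

Lemma flip_letter b : flipLR (letter b) = letter (~~ b).
Proof. by case: b. Qed.

Lemma nth_S l m n r : r < n -> nth L (Fw (Posz l) m n) r = letter ((r * m) %% n < l).
Proof. move=> Hr; rewrite nth_Fw //; congr letter; apply/idP/idP; lia. Qed.

Lemma modeq n x y a b : x + a * n = y + b * n -> x %% n = y %% n.
Proof. by move=> H; rewrite -(modnMDl a x) -(modnMDl b y) addnC H addnC. Qed.

Lemma plus_core n m N M i a s T : 0 < n -> M * n = m * N + 1 -> i < N ->
  i * m = a * n + s -> s < n -> ((i * M) %% N < T) = (s * N + i < n * T).
Proof.
move=> n0 HM iN Him sn.
have E : i * M * n = a * N * n + (s * N + i).
  by rewrite -mulnA HM mulnDr muln1 mulnA Him; lia.
have aM : a * N <= i * M.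
  by rewrite -(leq_pmul2r n0) E leq_addr.
have Ey : (i * M - a * N) * n = s * N + i by rewrite mulnBl E addKn.
have yN : i * M - a * N < N.
  rewrite -(ltn_pmul2r n0) Ey.
  have := leq_mul sn (leqnn N); rewrite mulSn; lia.
have -> : (i * M) %% N = i * M - a * N.
  rewrite -{1}(subnKC aM) modnMDl modn_small //.
rewrite -(ltn_pmul2r n0) Ey; apply/idP/idP; lia.
Qed.

Lemma minus_core n m N M i a s T : 0 < n -> m * N = M * n + 1 -> i < N -> 0 < i ->
  i * m = a * n + s -> 0 < s -> s <= n -> ((i * M) %% N < T) = (s * N < n * T + i).
Proof.
move=> n0 HM iN i0 Him s0 sn.
have E : i * M * n + i = a * N * n + s * N.
  have h1 : i * (M * n + 1) = i * (m * N) by rewrite HM.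
  have h2 : i * m * N = (a * n + s) * N by rewrite Him.
  lia.
have aM : a * N <= i * M.
  rewrite -(leq_pmul2r n0).
  have : N <= s * N by rewrite leq_pmull.
  lia.
have Ey : (i * M - a * N) * n + i = s * N.
  by rewrite mulnBl; have := leq_mul aM (leqnn n); lia.
have yN : i * M - a * N < N.
  rewrite -(ltn_pmul2r n0).
  have := leq_mul sn (leqnn N); lia.
have -> : (i * M) %% N = i * M - a * N.
  rewrite -{1}(subnKC aM) modnMDl modn_small //.
rewrite -(ltn_pmul2r n0); apply/idP/idP; lia.
Qed.

Lemma F5 n m d l x : 1 < n -> l < n -> (d * m) %% n = 1 %% n ->
  (x %% n == (l * d) %% n) = ((x * m) %% n == l).
Proof.
move=> n1 ln hd.
have x1 : forall y, (y * (d * m)) %% n = y %% n.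
  by move=> y; rewrite -modnMmr hd modnMmr muln1.
apply/eqP/eqP => H.
  by rewrite -modnMml H modnMml -mulnA x1 modn_small.
by rewrite -x1 (mulnC d m) mulnA -modnMml H.
Qed.

Lemma modn_subM n c i : c * n <= i -> (i - c * n) %% n = i %% n.
Proof. by move=> H; rewrite -{2}(subnK H) addnC modnMDl. Qed.

Lemma ltnW_mul q c n : q < c -> q * n + n <= c * n.
Proof. by move=> H; have := leq_mul H (leqnn n); rewrite mulSn addnC. Qed.

Lemma modn_subn n i : n <= i -> (i - n) %% n = i %% n.
Proof. by move=> H; rewrite -{2}(subnK H) modnDr. Qed.

Lemma sub_lt_eq (y K c : nat) : (y + c < K) = (y < K - c).
Proof. by apply/idP/idP; lia. Qed.


Tactic Notation "lia_on" ne_hyp_list(l) := clear - l; lia.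

Theorem proposition3p8
  (l m n : nat) (hl0 : (0 < l)%N) (hm0 : (0 < m)%N)
  (hln : (l < n)%N) (hmn : (m < n)%N) (hcop : coprime m n)
  (d : nat) (hd1 : (0 < d < n)%N) (hd : (d * m) %% n = 1 %% n)
  (mm nm mp np : nat) (hnm : (0 < nm)%N) (hnp : (0 < np)%N)
  (hmsum : (mm + mp)%N = m) (hnsum : (nm + np)%N = n)
  (hdet : (mp * nm)%N = (mm * np + 1)%N)
  (hlt : (mm * np < mp * nm)%N)
  (k : nat) (hk : (0 < k)%N) (chi : int) (hchi : (`|chi| < k)%N) :
  let S := Fw (Posz l) m n in
  let Xh := take (n - d) S in
  let Yh := drop (n - d) S in
  let c := `|chi|%N in
  ((chi < 0)%R ->
     Gplus l m n mp np k chi = wpow S (k - c) ++ Xh ++ wpow (wflip S 0) c)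
  /\ ((0 <= chi)%R ->
     Gplus l m n mp np k chi = wpow (wflip S (l * d)) c ++ wpow S (k - c) ++ Xh)
  /\ ((chi <= 0)%R ->
     Gminus l m n mm nm k chi = S ++ wpow (wflip S 0) c ++ Yh ++ wpow S (k - c - 1))
  /\ ((0 < chi)%R ->
     Gminus l m n mm nm k chi =
       wflip S (l * d) ++ Yh ++ wpow S (k - c) ++ wpow (wflip S (l * d)) (c - 1)).
Proof.
move=> S Xh Yh c.
have n1 : 1 < n by lia.
have n0 : 0 < n by lia.
have F1 : mp * n = m * np + 1 by rewrite -hnsum -hmsum; nia.
have F2 : m * nm = mm * n + 1 by rewrite -hnsum -hmsum; nia.
have Hnpd : np + d = n.
  have Hdm := divn_eq (d * m) n. rewrite hd (modn_small n1) in Hdm.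
  have H0 : (np + d) %% n = 0 %% n.
    apply: (@modeq n _ _ ((d * m) %/ n * np) (d * mp)).
    have e1 : d * mp * n = d * m * np + d by rewrite -mulnA F1 mulnDr muln1 mulnA.
    have e2 : d * m * np = (d * m) %/ n * n * np + np by rewrite {1}Hdm mulnDl mul1n.
    lia.
  have Hq := divn_eq (np + d) n. rewrite H0 mod0n addn0 in Hq.
  move: Hq; set q := (np + d) %/ n => Hq.
  have : q = 1.
    case: q Hq => [|[|q]] Hq //; lia.
  move=> q1; rewrite q1 in Hq; lia.
have Hnm : nm = d by lia.
have Hsize : size S = n by rewrite size_Fw.
have HX : Xh = take np S by rewrite /Xh; congr take; lia.
have HY : Yh = drop np S by rewrite /Yh; congr drop; lia.
have Hld := divn_eq (l * d) n.
set e := (l * d) %% n in Hld.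
set q0 := (l * d) %/ n in Hld.
have e0 : 0 < e.
  rewrite lt0n; apply/negP => /eqP He.
  have := @F5 n m d l 0 n1 hln hd. rewrite -/e He !mod0n eqxx => /esym/eqP; lia.
have en : e < n by rewrite ltn_pmod.
have q0l : q0 < l.
  rewrite -(ltn_pmul2r n0).
  have : l * d < l * n by rewrite ltn_pmul2l //; case/andP: hd1.
  lia.
have Hlp : n * lplus l n np = l * np + e.
  have E1 : l * np + n.-1 = (l - q0) * n + (n.-1 - e).
    have : l * np + l * d = l * n by rewrite -mulnDr Hnpd.
    have := @ltnW_mul q0 l n q0l. rewrite mulnBl. lia.
  rewrite /lplus E1 divnMDl // divn_small; last lia.
  have : l * np + l * d = l * n by rewrite -mulnDr Hnpd.
  have := @ltnW_mul q0 l n q0l. rewrite addn0 mulnBr. lia.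
have Hlm : l * nm = n * lminus l n nm + e.
  by rewrite /lminus Hnm -/q0 {1}Hld mulnC.
have Hedef : (l * d) %% n = e by [].
clearbody e q0.
have HMp : (k * m + mp) * n = m * (k * n + np) + 1 by rewrite mulnDl F1; lia.
have HP2 : forall c T, c < k -> (forall x : nat, (x%:Z < T)%R = (x < k * l + lplus l n np + c)) ->
   Fw T (k * m + mp) (k * n + np) = wpow (wflip S (l * d)) c ++ wpow S (k - c) ++ take np S.
  move=> c0 T ck HT.
  have X2 := @ltnW_mul c0 k n ck.
  apply: (@eq_from_nth _ L).
    by rewrite size_Fw !size_cat !size_wpow size_wflip Hsize size_takel ?Hsize; lia.
  rewrite size_Fw => i Hi.
  rewrite nth_Fw // HT.
  have Hr := divn_eq i n. set q := i %/ n in Hr. set r := i %% n in Hr.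
  have rn : r < n by rewrite ltn_pmod.
  have Hs := divn_eq (i * m) n. set s := (i * m) %% n in Hs.
  have sn : s < n by rewrite ltn_pmod.
  have Hrs : (r * m) %% n = s by rewrite modnMml.
  have Hre : (r == e) = (s == l) by have := @F5 n m d l i n1 hln hd; rewrite Hedef; apply.
  rewrite (@plus_core n m _ _ i ((i * m) %/ n) s) //.
  have Hrdef : i %% n = r by []. have Hqdef : i %/ n = q by [].
  clearbody q r s. clear Hs.
  case: (ltnP i (c0 * n)) => H1.
    rewrite nth_cat size_wpow size_wflip Hsize H1 nth_wpow ?size_wflip ?Hsize //.
    rewrite Hrdef nth_wflip ?Hsize // Hedef nth_S // Hrs Hre.
    have qc : q < c0 by rewrite -Hqdef ltn_divLR.
    case: (ltngtP s l) => Hsl.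
    - congr letter. have X := leq_mul Hsl (leqnn (k * n + np)); rewrite mulSn in X.
      lia_on n0 X Hlp Hi Hr.
    - congr letter. have X := leq_mul Hsl (leqnn (k * n + np)); rewrite mulSn in X.
      lia_on n0 X X2 Hlp Hi en.
    - move: Hre; rewrite Hsl eqxx => /eqP re; rewrite /= -?[L]/(letter true) -?[R]/(letter false); congr letter.
      have X := @ltnW_mul q c0 n qc. lia_on n0 X re Hlp Hr.
  have H1' : (i < c0 * n) = false by rewrite ltnNge H1.
  case: (ltnP i (k * n)) => H2.
    rewrite nth_cat size_wpow size_wflip Hsize H1'.
    rewrite nth_cat size_wpow Hsize ifT; last by lia_on H1 H2 ck.
    rewrite nth_wpow ?Hsize; last by lia_on H1 H2 ck.
    rewrite modn_subM // Hrdef nth_S // Hrs.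
    have qc : c0 <= q by rewrite -Hqdef leq_divRL.
    case: (ltngtP s l) => Hsl.
    - congr letter. have X := leq_mul Hsl (leqnn (k * n + np)); rewrite mulSn in X.
      lia_on n0 X Hlp Hi Hr.
    - congr letter. have X := leq_mul Hsl (leqnn (k * n + np)); rewrite mulSn in X.
      lia_on n0 X X2 Hlp Hi en.
    - move: Hre; rewrite Hsl eqxx => /eqP re; rewrite /= -?[L]/(letter true) -?[R]/(letter false); congr letter.
      have X := leq_mul qc (leqnn n). lia_on n0 X re Hlp Hr.
  rewrite nth_cat size_wpow size_wflip Hsize H1'.
  have H2' : (i - c0 * n < (k - c0) * n) = false by lia_on H2 ck.
  rewrite nth_cat size_wpow Hsize H2'.
  have E3 : i - c0 * n - (k - c0) * n = i - k * n.
    rewrite -subnDA -mulnDl subnKC //; lia_on ck.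
  rewrite E3 nth_take; last by lia_on H2 Hi.
  have E4 : i - k * n = r.
    rewrite -Hrdef -(@modn_small (i - k * n) n) ?modn_subM //; lia_on H2 Hi hnp hnsum.
  rewrite E4 nth_S // Hrs.
  have qk : q = k.
    apply/eqP; rewrite -Hqdef eqn_leq -ltnS ltn_divLR // leq_divRL // H2 andbT; lia_on Hi hnp hnsum.
  case: (ltngtP s l) => Hsl.
  - congr letter. have X := leq_mul Hsl (leqnn (k * n + np)); rewrite mulSn in X.
    lia_on n0 X Hlp Hi.
  - congr letter. have X := leq_mul Hsl (leqnn (k * n + np)); rewrite mulSn in X.
    lia_on n0 X X2 Hlp Hi en.
  - move: Hre; rewrite Hsl eqxx => /eqP re; rewrite /= -?[L]/(letter true) -?[R]/(letter false); congr letter.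
    lia_on n0 X2 re qk Hlp Hr.
have HP1 : forall c T, c < k -> (forall x : nat, (x%:Z < T)%R = (x + c < k * l + lplus l n np)) ->
   Fw T (k * m + mp) (k * n + np) = wpow S (k - c) ++ take np S ++ wpow (wflip S 0) c.
  move=> c0 T ck HT.
  have X2 := @ltnW_mul c0 k n ck.
  have Ekc : (k - c0) * n + c0 * n = k * n by rewrite -mulnDl subnK // ltnW.
  have ckl : c0 <= k * l + lplus l n np.
    have : k <= k * l by rewrite leq_pmulr.
    lia_on ck.
  have HnT : n * (k * l + lplus l n np - c0) = l * (k * n + np) + e - n * c0.
    rewrite mulnBr. have := leq_mul (leqnn n) ckl. lia_on Hlp.
  apply: (@eq_from_nth _ L).
    by rewrite size_Fw !size_cat !size_wpow size_wflip Hsize size_takel ?Hsize; lia.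
  rewrite size_Fw => i Hi.
  rewrite nth_Fw // HT.
  have -> : ((i * (k * m + mp)) %% (k * n + np) + c0 < k * l + lplus l n np)
          = ((i * (k * m + mp)) %% (k * n + np) < k * l + lplus l n np - c0).
    by apply/idP/idP; lia_on ckl.
  have Hr := divn_eq i n. set q := i %/ n in Hr. set r := i %% n in Hr.
  have rn : r < n by rewrite ltn_pmod.
  have Hs := divn_eq (i * m) n. set s := (i * m) %% n in Hs.
  have sn : s < n by rewrite ltn_pmod.
  have Hrs : (r * m) %% n = s by rewrite modnMml.
  have Hre : (r == e) = (s == l) by have := @F5 n m d l i n1 hln hd; rewrite Hedef; apply.
  have Hsi : (i * m + 1) %% n = (s + 1) %% n by rewrite modnDml.
  rewrite (@plus_core n m _ _ i ((i * m) %/ n) s) // HnT.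
  have Hrdef : i %% n = r by []. have Hqdef : i %/ n = q by [].
  clearbody q r s. clear Hs.
  have ri : r <= i by rewrite -Hrdef leq_mod.
  case: (ltnP i ((k - c0) * n)) => H1.
    rewrite nth_cat size_wpow Hsize H1 nth_wpow ?Hsize //.
    rewrite Hrdef nth_S // Hrs.
    case: (ltngtP s l) => Hsl.
    - congr letter. have X := leq_mul Hsl (leqnn (k * n + np)); rewrite mulSn in X.
      lia_on n0 X Hlp Hi H1 Ekc.
    - congr letter. have X := leq_mul Hsl (leqnn (k * n + np)); rewrite mulSn in X.
      lia_on n0 X X2 Hlp Hi en.
    - move: Hre; rewrite Hsl eqxx => /eqP re; congr letter.
      lia_on ri re.
  have H1' : (i < (k - c0) * n) = false by rewrite ltnNge H1.
  case: (ltnP i ((k - c0) * n + np)) => H2.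
    rewrite nth_cat size_wpow Hsize H1'.
    rewrite nth_cat size_takel ?Hsize; last by lia_on hnsum hnm.
    rewrite ifT; last by lia_on H1 H2.
    rewrite nth_take; last by lia_on H1 H2.
    have E4 : i - (k - c0) * n = r.
      rewrite -Hrdef -(@modn_small (i - (k - c0) * n) n) ?modn_subM //; lia_on H1 H2 hnm hnsum.
    rewrite E4 nth_S // Hrs.
    case: (ltngtP s l) => Hsl.
    - congr letter. have X := leq_mul Hsl (leqnn (k * n + np)); rewrite mulSn in X.
      lia_on n0 X Hlp Hi H2 Ekc.
    - congr letter. have X := leq_mul Hsl (leqnn (k * n + np)); rewrite mulSn in X.
      lia_on n0 X X2 Hlp Hi en.
    - move: Hre; rewrite Hsl eqxx => /eqP re; congr letter.
      lia_on ri re.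
  rewrite nth_cat size_wpow Hsize H1'.
  rewrite nth_cat size_takel ?Hsize; last by lia_on hnsum hnm.
  rewrite ifF; last by lia_on H1 H2.
  have Hj : i - (k - c0) * n - np < c0 * n by lia_on H2 Hi Ekc.
  rewrite nth_wpow size_wflip Hsize //.
  set j := i - (k - c0) * n - np in Hj *.
  have Eij : i = j + (k - c0) * n + np by rewrite /j; lia_on H2.
  have Hjm : (i * m + 1) %% n = (j * m) %% n.
    apply: (@modeq n _ _ 0 ((k - c0) * m + mp)).
    rewrite Eij mulnDl mulnDl. lia_on F1.
  set u := j %% n.
  have un : u < n by rewrite ltn_pmod.
  have ju : u <= j by rewrite leq_mod.
  rewrite nth_wflip ?Hsize // mod0n nth_S //.
  have Hu0 : (u == 0) = ((u * m) %% n == 0).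
    by have := @F5 n m d 0 u n1 n0 hd; rewrite mul0n mod0n modn_small.
  have Hue : (u == e) = ((u * m) %% n == l).
    by have := @F5 n m d l u n1 hln hd; rewrite Hedef modn_small.
  have Htu : (u * m) %% n = (s + 1) %% n by rewrite modnMml -Hjm.
  clearbody j u. rewrite Htu in Hu0 Hue *.
  case: (ltnP (s + 1) n) => Hs1.
    rewrite (modn_small Hs1) in Hu0 Hue *.
    rewrite addn1 /= in Hu0. rewrite Hu0 addn1.
    case: (ltngtP s.+1 l) => Hsl.
    - congr letter. have X := leq_mul Hsl (leqnn (k * n + np)); rewrite !mulSn in X.
      lia_on n0 X Hi X2.
    - congr letter. have Hls : l <= s by rewrite -ltnS.
      have X := leq_mul Hls (leqnn (k * n + np)).
      lia_on n0 X X2 Hi en Eij Ekc.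
    - move: Hue; rewrite addn1 Hsl eqxx => /eqP ue; congr letter.
      have X : s.+1 * (k * n + np) = l * (k * n + np) by rewrite Hsl.
      rewrite mulSn in X. 
      have -> : eqn l 0 = false by move: hl0; case: (l).
      lia_on n0 X Eij ue ju Ekc.
  have sn1 : s = n.-1 by lia_on Hs1 sn.
  have Hs1' : (s + 1) %% n = 0 by rewrite sn1 addn1 prednK // modnn.
  rewrite Hu0 Hs1' /= hl0 /= -[R]/(letter false).
  congr letter.
  have X : l * (k * n + np) <= s * (k * n + np) by rewrite leq_mul2r sn1; apply/orP; right; lia_on hln.
  lia_on X Eij Ekc en X2.
have HMm : m * (k * n + nm) = (k * m + mm) * n + 1 by rewrite mulnDr F2; lia.
have HM1 : forall c T, c < k -> (forall x : nat, (x%:Z < T)%R = (x + c < k * l + lminus l n nm)) ->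
   Fw T (k * m + mm) (k * n + nm) = S ++ wpow (wflip S 0) c ++ drop np S ++ wpow S (k - c - 1).
  move=> c0 T ck HT.
  have X2 := @ltnW_mul c0 k n ck.
  have lN : k * n + nm <= l * (k * n + nm) by rewrite leq_pmull.
  have HnT : n * (k * l + lminus l n nm - c0) = l * (k * n + nm) - e - n * c0.
    rewrite mulnBr. lia_on Hlm.
  have kl : k <= k * l by rewrite leq_pmulr.
  have Ek1 : (k - c0 - 1) * n = k * n - c0 * n - n by rewrite !mulnBl mul1n.
  apply: (@eq_from_nth _ L).
    rewrite size_Fw !size_cat !size_wpow size_wflip size_drop Hsize; lia_on Ek1 hnsum X2.
  rewrite size_Fw => i Hi.
  rewrite nth_Fw // HT sub_lt_eq.
  case: (posnP i) => [i0|ipos].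
    rewrite i0 mul0n mod0n nth_cat Hsize n0 nth_S // mul0n mod0n hl0.
    congr letter. lia_on kl ck.
  have finCD : forall p, c0.+1 * n <= i -> ((p.+1) * (k * n + nm) < l * (k * n + nm) - e - n * c0 + i) = (p < l).
    move=> p H1. rewrite mulSn in H1.
    case: (ltngtP p l) => Hsl.
    - have X := leq_mul Hsl (leqnn (k * n + nm)). lia_on X X2 en H1 lN.
    - have X := leq_mul Hsl (leqnn (k * n + nm)). rewrite !mulSn in X. lia_on X Hi.
    - rewrite Hsl. lia_on Hi. 
  have Hr := divn_eq i n. set q := i %/ n in Hr. set r := i %% n in Hr.
  have rn : r < n by rewrite ltn_pmod.
  have Hs := divn_eq (i * m) n. set s := (i * m) %% n in Hs.
  have sn : s < n by rewrite ltn_pmod.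
  have Hrs : (r * m) %% n = s by rewrite modnMml.
  have Hre : (r == e) = (s == l) by have := @F5 n m d l i n1 hln hd; rewrite Hedef; apply.
  have Hr0 : (r == 0) = (s == 0) by have := @F5 n m d 0 i n1 n0 hd; rewrite mul0n mod0n; apply.
  have Hp := divn_eq (i * m + n.-1) n. set p := (i * m + n.-1) %% n in Hp.
  set a := (i * m + n.-1) %/ n in Hp.
  have pn : p < n by rewrite ltn_pmod.
  have Hps : p = (s + n.-1) %% n by rewrite modnDml.
  have im1 : 1 <= i * m by have := leq_mul ipos hm0.
  have a0 : 0 < a.
    rewrite lt0n; apply/eqP => a0; rewrite a0 mul0n in Hp; lia_on Hp pn im1.
  have Hmi : i * m = (a - 1) * n + p.+1.
    rewrite mulnBl mul1n. have := leq_mul a0 (leqnn n). lia_on Hp n0.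
  rewrite (@minus_core n m _ _ i (a - 1) p.+1 _ n0 HMm Hi ipos Hmi) // HnT.
  have Hrdef : i %% n = r by []. have Hqdef : i %/ n = q by [].
  have Hsdef : (i * m) %% n = s by [].
  clearbody q r s p a. clear Hs Hp.
  have Hsp : 0 < s -> s = p.+1.
    move=> s0; rewrite Hps.
    have -> : s + n.-1 = s.-1 + n by lia_on s0 n0.
    rewrite modnDr modn_small; lia_on s0 sn.
  case: (ltnP i n) => H1.
    rewrite nth_cat Hsize H1 nth_S //.
    have ri : r = i by rewrite -Hrdef modn_small.
    have s0 : 0 < s by rewrite lt0n -Hr0 ri; lia_on ipos.
    rewrite Hsdef (Hsp s0).
    rewrite (Hsp s0) in Hre.
    case: (ltngtP p.+1 l) => Hsl.
    - congr letter. have X := leq_mul Hsl (leqnn (k * n + nm)). rewrite mulSn in X.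
      lia_on X X2 en lN H1.
    - congr letter. have X := leq_mul Hsl (leqnn (k * n + nm)). rewrite mulSn in X.
      lia_on X Hi lN.
    - move: Hre; rewrite Hsl eqxx => /eqP re; congr letter.
      rewrite ri in re. lia_on re lN Hi.
  have H1' : (i < n) = false by rewrite ltnNge H1.
  case: (ltnP i (c0.+1 * n)) => H2.
    rewrite nth_cat Hsize H1' nth_cat size_wpow size_wflip Hsize ifT; last by rewrite mulSn in H2; lia_on H1 H2.
    rewrite nth_wpow size_wflip Hsize; last by rewrite mulSn in H2; lia_on H1 H2.
    rewrite modn_subn // Hrdef nth_wflip ?Hsize // mod0n nth_S // Hrs Hr0.
    case: (posnP s) => [s0 | s0].
      rewrite s0 /= hl0 /=.
      have Hp' : p = n.-1 by rewrite Hps s0 add0n modn_small //; lia_on n0.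
      rewrite Hp' prednK // -[R]/(letter false). congr letter.
      have X := leq_mul hln (leqnn (k * n + nm)). rewrite mulSn in X.
      lia_on X Hi.
    rewrite (Hsp s0) /=. rewrite (Hsp s0) in Hre.
    have qc : q < c0.+1 by rewrite -Hqdef ltn_divLR.
    case: (ltngtP p.+1 l) => Hsl.
    - congr letter. have X := leq_mul Hsl (leqnn (k * n + nm)). rewrite mulSn in X.
      lia_on X X2 en lN.
    - congr letter. have X := leq_mul Hsl (leqnn (k * n + nm)). rewrite mulSn in X.
      lia_on X Hi lN.
    - move: Hre; rewrite Hsl eqxx => /eqP re; congr letter.
      have X := leq_mul qc (leqnn n). lia_on X re Hr n0 Hi lN.
  rewrite finCD //.
  have H2' : (i - n < c0 * n) = false by rewrite mulSn in H2; lia_on H2.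
  rewrite nth_cat Hsize H1' nth_cat size_wpow size_wflip Hsize H2'.
  rewrite nth_cat size_drop Hsize.
  case: (ltnP (i - n - c0 * n) (n - np)) => H3.
    rewrite nth_drop nth_S; last by lia_on H3 hnsum.
    have -> : ((np + (i - n - c0 * n)) * m) %% n = p.
      rewrite Hps -Hsdef modnDml.
      apply: (@modeq n _ _ (1 + c0.+1 * m) mp).
      have Eij : i = (i - n - c0 * n) + n + c0 * n by lia_on H2' H1.
      move: (i - n - c0 * n) Eij => j Eij. rewrite Eij. lia_on F1 n0.
    by [].
  have H3' : (i - n - c0 * n < n - np) = false by rewrite ltnNge H3.
  rewrite nth_wpow Hsize; last by rewrite Ek1; lia_on H3 Hi X2 hnsum hnm.
  rewrite nth_S ?ltn_pmod //.
  have -> : (((i - n - c0 * n - (n - np)) %% n) * m) %% n = p.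
    rewrite modnMml Hps -Hsdef modnDml.
    apply: (@modeq n _ _ (1 + mm + c0.+1 * m) 0).
    have Eij : i = (i - n - c0 * n - (n - np)) + nm + n + c0 * n by lia_on H2' H1 H3 hnsum.
    move: (i - n - c0 * n - (n - np)) Eij => j Eij. rewrite Eij. lia_on F2 n0.
  by [].
have HM2 : forall c T, 0 < c < k -> (forall x : nat, (x%:Z < T)%R = (x < k * l + lminus l n nm + c)) ->
   Fw T (k * m + mm) (k * n + nm) = wflip S (l * d) ++ drop np S ++ wpow S (k - c) ++ wpow (wflip S (l * d)) (c - 1).
  move=> c0 T /andP [c0p ck] HT.
  have X2 := @ltnW_mul c0 k n ck.
  have lN : k * n + nm <= l * (k * n + nm) by rewrite leq_pmull.
  have HnT : n * (k * l + lminus l n nm + c0) = l * (k * n + nm) - e + n * c0.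
    lia_on Hlm.
  have nc : n <= n * c0 by rewrite leq_pmulr.
  have Ekc : (k - c0) * n + c0 * n = k * n by rewrite -mulnDl subnK // ltnW.
  have Ec1 : (c0 - 1) * n = c0 * n - n by rewrite mulnBl mul1n.
  apply: (@eq_from_nth _ L).
    rewrite size_Fw !size_cat !size_wpow !size_wflip size_drop Hsize Ec1.
    have := leq_mul c0p (leqnn n). rewrite mul1n. lia_on Ekc hnsum X2.
  rewrite size_Fw => i Hi.
  rewrite nth_Fw // HT.
  case: (posnP i) => [i0|ipos].
    rewrite i0 mul0n mod0n nth_cat size_wflip Hsize n0 nth_wflip ?Hsize // Hedef.
    have -> : (0 == e) = false by rewrite eq_sym; apply/negbTE; rewrite -lt0n.
    rewrite nth_S // mul0n mod0n hl0. congr letter. lia_on c0p.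
  have Hr := divn_eq i n. set q := i %/ n in Hr. set r := i %% n in Hr.
  have rn : r < n by rewrite ltn_pmod.
  have Hs := divn_eq (i * m) n. set s := (i * m) %% n in Hs.
  have sn : s < n by rewrite ltn_pmod.
  have Hrs : (r * m) %% n = s by rewrite modnMml.
  have Hre : (r == e) = (s == l) by have := @F5 n m d l i n1 hln hd; rewrite Hedef; apply.
  have Hr0 : (r == 0) = (s == 0) by have := @F5 n m d 0 i n1 n0 hd; rewrite mul0n mod0n; apply.
  have Hp := divn_eq (i * m + n.-1) n. set p := (i * m + n.-1) %% n in Hp.
  set a := (i * m + n.-1) %/ n in Hp.
  have pn : p < n by rewrite ltn_pmod.
  have Hps : p = (s + n.-1) %% n by rewrite modnDml.
  have im1 : 1 <= i * m by have := leq_mul ipos hm0.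
  have a0 : 0 < a.
    rewrite lt0n; apply/eqP => a0; rewrite a0 mul0n in Hp; lia_on Hp pn im1.
  have Hmi : i * m = (a - 1) * n + p.+1.
    rewrite mulnBl mul1n. have := leq_mul a0 (leqnn n). lia_on Hp n0.
  rewrite (@minus_core n m _ _ i (a - 1) p.+1 _ n0 HMm Hi ipos Hmi) // HnT.
  have Hrdef : i %% n = r by []. have Hqdef : i %/ n = q by [].
  have Hsdef : (i * m) %% n = s by [].
  have Hpdef : (i * m + n.-1) %% n = p by [].
  clearbody q r s p a. clear Hs Hp.
  have Hsp : 0 < s -> s = p.+1.
    move=> s0; rewrite Hps.
    have -> : s + n.-1 = s.-1 + n by lia_on s0 n0.
    rewrite modnDr modn_small; lia_on s0 sn.
  case: (ltnP i n) => H1.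
    rewrite nth_cat size_wflip Hsize H1 nth_wflip ?Hsize // Hedef nth_S //.
    have ri : r = i by rewrite -Hrdef modn_small.
    have s0 : 0 < s by rewrite lt0n -Hr0 ri; lia_on ipos.
    rewrite -ri Hre Hrs (Hsp s0).
    case: (ltngtP p.+1 l) => Hsl.
    - congr letter. have X := leq_mul Hsl (leqnn (k * n + nm)). rewrite mulSn in X.
      lia_on X en lN X2.
    - congr letter. have X := leq_mul Hsl (leqnn (k * n + nm)). rewrite mulSn in X.
      lia_on X H1 lN X2 ri.
    - rewrite /= -[L]/(letter true) Hsl. congr letter. lia_on nc en lN X2.
  have Hnm_i : nm <= i by lia_on H1 hnsum hnp.
  have Hip : ((i - nm) %% n == e) = (p == l).
    have := @F5 n m d l (i - nm) n1 hln hd; rewrite Hedef => ->.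
    congr (_ == _). rewrite -Hpdef.
    apply: (@modeq n _ _ (1 + mm) 0).
    have Eij : i = (i - nm) + nm by lia_on Hnm_i.
    move: (i - nm) Eij => j Eij. rewrite Eij. lia_on F2 n0.
  have finBCD : ((p.+1) * (k * n + nm) < l * (k * n + nm) - e + n * c0 + i)
     = (if n + nm + (k - c0) * n <= i then p <= l else p < l).
    case: (ltngtP p l) => Hsl.
    - have X := leq_mul Hsl (leqnn (k * n + nm)). case: ifP => _; lia_on X en nc lN.
    - have X := leq_mul Hsl (leqnn (k * n + nm)). rewrite !mulSn in X.
      case: ifP => _; lia_on X Hi X2 H1 lN.
    - move: Hip; rewrite Hsl eqxx => /eqP Hu.
      have Hq := divn_eq (i - nm) n. rewrite Hu in Hq.
      move: ((i - nm) %/ n) Hq => q' Hq.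
      case: (ltnP (k - c0) q') => Hq'.
      + have X := leq_mul Hq' (leqnn n). rewrite mulSn in X.
        rewrite ifT; last by lia_on Hq X en Ekc Hnm_i.
        rewrite mulSn. lia_on Hq X Ekc Hnm_i lN X2 en.
      + have X := leq_mul Hq' (leqnn n).
        rewrite ifF; last by lia_on Hq X en Ekc Hnm_i.
        rewrite mulSn. lia_on Hq X Ekc Hnm_i lN X2 en.
  rewrite finBCD.
  have H1' : (i < n) = false by rewrite ltnNge H1.
  rewrite nth_cat size_wflip Hsize H1' nth_cat size_drop Hsize.
  case: (ltnP (i - n) (n - np)) => H2.
    have Hkc0 := leq0n ((k - c0) * n).
    rewrite ifF; last by lia_on H2 hnsum H1 Hkc0.
    rewrite nth_drop nth_S; last by lia_on H2 H1 hnsum.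
    have -> : ((np + (i - n)) * m) %% n = p.
      rewrite -Hpdef.
      apply: (@modeq n _ _ (1 + m) mp).
      have Eij : i = (i - n) + n by lia_on H1.
      move: (i - n) Eij => j Eij. rewrite Eij. lia_on F1 n0.
    by [].
  rewrite nth_cat size_wpow Hsize.
  case: (ltnP (i - n - (n - np)) ((k - c0) * n)) => H3.
    rewrite ifF; last by lia_on H2 H3 hnsum H1.
    rewrite nth_wpow Hsize // nth_S ?ltn_pmod // modnMml.
    have -> : ((i - n - (n - np)) * m) %% n = p.
      rewrite -Hpdef.
      apply: (@modeq n _ _ (1 + m + mm) 0).
      have Eij : i = (i - n - (n - np)) + n + nm by lia_on H1 H2 hnsum.
      move: (i - n - (n - np)) Eij => j Eij. rewrite Eij. lia_on F2 n0.
    by [].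
  rewrite ifT; last by lia_on H2 H3 hnsum H1.
  rewrite nth_wpow ?size_wflip Hsize; last first.
    rewrite Ec1. lia_on H2 H3 Hi hnsum Ekc X2.
  set j := i - n - (n - np) - (k - c0) * n.
  have jp : ((j %% n) * m) %% n = p.
    rewrite modnMml -Hpdef.
    apply: (@modeq n _ _ (1 + m + mm + (k - c0) * m) 0).
    have Eij : i = j + (k - c0) * n + n + nm by rewrite /j; lia_on H1 H2 H3 hnsum.
    clearbody j. rewrite Eij. lia_on F2 n0.
  have Hue : (j %% n == e) = (p == l).
    by have := @F5 n m d l (j %% n) n1 hln hd; rewrite Hedef modn_mod jp.
  rewrite nth_wflip ?Hsize ?ltn_pmod // Hedef Hue nth_S ?ltn_pmod // jp.
  case: (ltngtP p l) => //= _.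
move: hchi. rewrite /c. clear c.
case: chi => [c1|c1] /= hchi.
  split; first by move=> H; exfalso; move: H; lia.
  split.
    move=> _. rewrite /Gplus HX. apply: HP2 => // x; apply/idP/idP; lia.
  split.
    move=> H. have c10 : c1 = 0 by move: H; lia.
    rewrite /Gminus HY. apply: HM1 => // x; rewrite c10; apply/idP/idP; lia.
  move=> H. have c10 : 0 < c1 by move: H; lia.
  rewrite /Gminus HY. apply: HM2; first by rewrite c10 hchi.
  move=> x. apply/idP/idP; lia.
split.
  move=> _. rewrite /Gplus HX. apply: HP1 => // x; apply/idP/idP; lia.
split; first by move=> H; exfalso; move: H; lia.
split.
  move=> _. rewrite /Gminus HY. apply: HM1 => // x; apply/idP/idP; lia.
by move=> H; exfalso; move: H; lia.
Qed.
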